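(* For $n\ge1$, \[\frac{2^n\,A_{n+1}(z)}{z}=\sum_{k=0}^{n}\binom nk B_k(z)\,B_{n-k}(z).\]
   Context: $A_n(z)=\sum_{\sigma\in\mathfrak S_n}z^{\mathrm{des}(\sigma)+1}$, where $\mathrm{des}(\sigma)=\#\{i\in[n-1]:\sigma_i>\sigma_{i+1}\}$. $\mathfrak B_k$ is the set of signed permutations $\pi=\pi_1\cdots\pi_k$ (words over $\{\pm1,\dots,\pm k\}$ with $|\pi_1|,\dots,|\pi_k|$ a permutation of $[k]$), compared as integers, with $\pi_0=0$; $\mathrm{des}_B(\pi)=\#\{i\in\{0,\dots,k-1\}:\pi_i>\pi_{i+1}\}$ and $B_k(z)=\sum_{\pi\in\mathfrak B_k}z^{\mathrm{des}_B(\pi)}$, with $B_0(z)=1$. *)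

(* Defs.v *)
From mathcomp Require Import all_boot all_order all_algebra all_fingroup.
Set Implicit Arguments. Unset Strict Implicit. Unset Printing Implicit Defensive.
Import GRing.Theory Num.Theory.
Local Open Scope ring_scope.

(* Permutations of [n] are represented by 'S_n (permutations of {0..n-1});
   position i (1-based) is the ordinal i-1, value sigma_i is (s (i-1)) + 1. *)

Definition des (n : nat) (s : 'S_n) : nat :=
  #|[set i : 'I_n | (i.+1 < n)%N &&
        [exists j : 'I_n, (val j == i.+1) && (s j < s i)%N]]|.

Definition eulerA (n : nat) : {poly int} :=
  \sum_(s : 'S_n) 'X ^+ (des s).+1.

(* Signed permutations of [k]: a pair (s, e) with s : 'S_k and sign vector e;
   the entry pi_i (1-based i) is  (-1)^(e (i-1)) * ((s (i-1)) + 1)  as an integer. *)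
Definition sperm_val (k : nat) (s : 'S_k) (e : {ffun 'I_k -> bool}) (i : 'I_k) : int :=
  (-1) ^+ (e i) * ((s i).+1)%:Z.

Definition sperm_at (k : nat) (s : 'S_k) (e : {ffun 'I_k -> bool}) (i : nat) : int :=
  match i with
  | 0 => 0
  | i'.+1 => if insub i' is Some j then sperm_val s e j else 0
  end.

Definition desB (k : nat) (s : 'S_k) (e : {ffun 'I_k -> bool}) : nat :=
  #|[set i : 'I_k | sperm_at s e (val i).+1 < sperm_at s e (val i)]|.

Definition eulerB (k : nat) : {poly int} :=
  \sum_(s : 'S_k) \sum_(e : {ffun 'I_k -> bool}) 'X ^+ (desB s e).

(* Main.v *)
Require Import Defs.
From mathcomp Require Import all_boot all_order all_algebra all_fingroup.
From mathcomp Require Import ring zify.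
Import Order.TTheory GRing.Theory Num.Theory.
Local Open Scope ring_scope.

Fixpoint dl (x : int) (l : seq int) : nat :=
  if l is y :: l' then ((y < x)%R : nat) + dl y l' else 0.

Definition ins (p : nat) (l : seq int) (v : int) := take p l ++ v :: drop p l.

Arguments ins : simpl never.
Lemma ins_cons p y l v : ins p.+1 (y :: l) v = y :: ins p l v.
Proof. by rewrite /ins. Qed.

Lemma insP (v : int) l : forall x, all (fun y => y < v) (x :: l) ->
 \sum_(p < (size l).+1) 'X^(dl x (ins p l v)) =
   ((dl x l).+1)%:R * 'X^(dl x l) + ((size l)%:R - (dl x l)%:R) * 'X^((dl x l).+1)
   :> {poly int}.
Proof.
elim: l => [|y l IH] x /=.
  rewrite andbT => xv; rewrite big_ord1 /ins /= ltNge (ltW xv) /= expr0.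
  by rewrite !mul1r subrr mul0r addr0.
case/and3P => xv yv alll.
rewrite big_ord_recl /=.
rewrite ltNge (ltW xv) yv /=.
under eq_bigr => i _ do rewrite add0n -[take i l ++ _]/(ins i l v) exprD.
rewrite -mulr_sumr IH /=; last by rewrite yv.
case: (y < x) => /=; rewrite ?add0n ?add1n !exprS ?expr0 -!natr1 ?natrD; ring.
Qed.

Lemma insN (v : int) l : forall x, all (fun y => v < y) (x :: l) ->
 \sum_(p < (size l).+1) 'X^(dl x (ins p l v)) =
   (dl x l)%:R * 'X^(dl x l) + (((size l).+1)%:R - (dl x l)%:R) * 'X^((dl x l).+1)
   :> {poly int}.
Proof.
elim: l => [|y l IH] x /=.
  rewrite andbT => xv; rewrite big_ord1 /ins /= xv /= expr0 expr1.
  by rewrite !mul0r add0r subr0 mul1r.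
case/and3P => xv yv alll.
rewrite big_ord_recl /=.
rewrite xv ltNge (ltW yv) /=.
under eq_bigr => i _ do rewrite add0n -[take i l ++ _]/(ins i l v) exprD.
rewrite -mulr_sumr IH /=; last by rewrite yv.
case: (y < x) => /=; rewrite ?add0n ?add1n !exprS ?expr0 -!natr1 ?natrD; ring.
Qed.


Lemma pascal2 (u : nat -> {poly int}) n :
  \sum_(k < n.+2) ('C(n.+1, k))%:R * (u k * u (n.+1 - k)%N) =
  \sum_(k < n.+1) ('C(n, k))%:R * (u k.+1 * u (n - k)%N + u k * u (n.+1 - k)%N).
Proof.
rewrite big_ord_recl /= bin0.
under eq_bigr => i _ do rewrite /bump /= add1n binS natrD mulrDl subSS.
rewrite big_split /=.
under [in RHS]eq_bigr => i _ do rewrite mulrDr.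
rewrite [in RHS]big_split /= addrA [RHS]addrC; congr (_ + _).
rewrite [in RHS]big_ord_recl /= bin0 subn0.
rewrite [X in _ + X = _]big_ord_recr /= bin_small // mul0r addr0.
by congr (_ + _); apply: eq_bigr => i _; rewrite /bump /= add1n subSS.
Qed.

Lemma alg_main (a u : nat -> {poly int}) :
 a 0%N = 'X -> u 0%N = 1 ->
 (forall n, a n.+1 = (n.+2)%:R * 'X * a n + 'X * (1 - 'X) * (a n)^`()) ->
 (forall k, u k.+1 = (1 + (2 * k + 1)%N%:R * 'X) * u k + 2%:R * 'X * (1 - 'X) * (u k)^`()) ->
 forall n, 2%:R ^+ n * a n = 'X * \sum_(k < n.+1) ('C(n,k))%:R * (u k * u (n - k)%N).
Proof.
move=> a0 u0 RA RB.
pose C n := \sum_(k < n.+1) ('C(n,k))%:R * (u k * u (n - k)%N).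
have RC : forall n, C n.+1 = (2%:R + (2 * n + 2)%N%:R * 'X) * C n + 2%:R * 'X * (1 - 'X) * (C n)^`().
  move=> n; rewrite /C pascal2.
  rewrite raddf_sum /= mulr_sumr mulr_sumr -big_split /=.
  apply: eq_bigr => [[k hk]] _ /=.
  have hkn : (k <= n)%N by [].
  rewrite subSn // !RB.
  have d1 : (1 : {poly int})^`() = 0 by rewrite -polyC1 derivC.
  rewrite derivM derivMn d1 mul0rn mul0r add0r derivM.
  rewrite !natrD natrB //.
  ring.
elim=> [|n IH]; first by rewrite expr0 mul1r a0 /C big_ord1 bin0 u0 !mul1r mulr1.
change (2%:R ^+ n * a n = 'X * C n) in IH.
change (2%:R ^+ n.+1 * a n.+1 = 'X * C n.+1).
rewrite RA RC.
have D : 2%:R ^+ n * (a n)^`() = C n + 'X * (C n)^`().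
  have := congr1 deriv IH.
  rewrite -natrX -mulr_natl !derivE /=.
  by rewrite mul0rn !(mul0r, mulr0, add0r, mulr1, mul1r) natrX.
rewrite exprS.
have -> : 2%:R * 2%:R ^+ n * ((n.+2)%:R * 'X * a n + 'X * (1 - 'X) * (a n)^`())
   = 2%:R * (n.+2)%:R * 'X * (2%:R ^+ n * a n) + 2%:R * 'X * (1 - 'X) * (2%:R ^+ n * (a n)^`()) by ring.
rewrite IH D !natrD.
have -> : (n.+2)%:R = n%:R + 2 :> {poly int} by rewrite -addn2 natrD.
ring.
Qed.


Lemma sum_perm_lift n (F : 'S_n.+1 -> {poly int}) :
  \sum_(t : 'S_n.+1) F t = \sum_(i : 'I_n.+1) \sum_(s : 'S_n) F (lift_perm i ord_max s).
Proof.
rewrite (partition_big (fun t : 'S_n.+1 => t^-1%g ord_max) predT) //=.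
apply: eq_bigr => i0 _.
rewrite (eq_bigl (fun t : 'S_n.+1 => t i0 == ord_max)); last first.
  by move=> t; apply/eqP/eqP => [<-|<-]; rewrite ?permKV ?permK.
rewrite (reindex (lift_perm i0 ord_max)); last first.
  pose ulsf i (s : 'S_n.+1) k := odflt k (unlift (s i) (s (lift i k))).
  have ulsfK i (s : 'S_n.+1) k: lift (s i) (ulsf i s k) = s (lift i k).
    rewrite /ulsf; have:= neq_lift i k.
    by rewrite -(can_eq (permK s)) => /unlift_some[] ? ? ->.
  have inj_ulsf: injective (ulsf i0 _).
    move=> s; apply: can_inj (ulsf (s i0) s^-1%g) _ => k'.
    by rewrite {1}/ulsf ulsfK !permK liftK.
  exists (fun s => perm (inj_ulsf s)) => [s _ | s].
    by apply/permP=> k'; rewrite permE /ulsf lift_perm_lift lift_perm_id liftK.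
  move/(s _ =P _) => si0; apply/permP=> k.
  case: (unliftP i0 k) => [k'|] ->; rewrite ?lift_perm_id //.
  by rewrite lift_perm_lift -si0 permE ulsfK.
by apply: eq_bigl => s; rewrite lift_perm_id eqxx.
Qed.

Definition extf n (i : 'I_n.+1) (b : bool) (e : {ffun 'I_n -> bool}) : {ffun 'I_n.+1 -> bool} :=
  [ffun j => if unlift i j is Some k then e k else b].

Arguments extf {n}.
Lemma sum_ffun_lift n (i : 'I_n.+1) (G : {ffun 'I_n.+1 -> bool} -> {poly int}) :
  \sum_(e' : {ffun 'I_n.+1 -> bool}) G e' =
  \sum_(b : bool) \sum_(e : {ffun 'I_n -> bool}) G (extf i b e).
Proof.
rewrite pair_big /= (reindex (fun p : bool * {ffun 'I_n -> bool} => extf i p.1 p.2)) //.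
exists (fun e' : {ffun 'I_n.+1 -> bool} => (e' i, [ffun k => e' (lift i k)])).
  move=> [b e] _ /=; congr (_, _).
    by rewrite /extf ffunE unlift_none.
  by apply/ffunP => k; rewrite !ffunE liftK.
move=> e' _; apply/ffunP => j; rewrite /= /extf ffunE.
by case: (unliftP i j) => [k|] ->; rewrite ?ffunE.
Qed.

Lemma map_lift (T : Type) n (i : 'I_n.+1) (g : 'I_n.+1 -> T) (h : 'I_n -> T) (v : T) :
  g i = v -> (forall k, g (lift i k) = h k) ->
  [seq g j | j <- enum 'I_n.+1] =
  take i [seq h k | k <- enum 'I_n] ++ v :: drop i [seq h k | k <- enum 'I_n].
Proof.
move=> gi gl.
apply: (@eq_from_nth _ v).
  rewrite size_cat -cat1s size_cat size_take size_drop !size_map -!enumT !size_enum_ord.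
  by move: (ltn_ord i) => ?; case: ifP => /=; lia.
move=> j; rewrite size_map size_enum_ord => hj.
rewrite (nth_map (Ordinal hj)) ?size_enum_ord // (nth_ord_enum (Ordinal hj) (Ordinal hj)).
have hi : (i <= n)%N by move: (ltn_ord i); lia.
rewrite nth_cat size_take size_map size_enum_ord.
have -> : (if (i < n)%N then (i : nat) else n) = i by case: ifP => //; lia.
case: (ltngtP j i) => [ji|ij|ij].
- have jn : (j < n)%N by lia.
  rewrite nth_take // (nth_map (Ordinal jn)) ?size_enum_ord //.
  rewrite (nth_ord_enum (Ordinal jn) (Ordinal jn)) -gl; congr g.
  by apply: val_inj; rewrite /= /bump leqNgt ji.
- have -> : (j - i = (j.-1 - i).+1)%N by lia.
  rewrite /= nth_drop.
  have -> : (i + (j.-1 - i) = j.-1)%N by lia.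
  have jn : (j.-1 < n)%N by lia.
  rewrite (nth_map (Ordinal jn)) ?size_enum_ord //.
  rewrite (nth_ord_enum (Ordinal jn) (Ordinal jn)) -gl; congr g.
  apply: val_inj; rewrite /= /bump.
  have -> : (i <= j.-1)%N by lia.
  by rewrite add1n; lia.
- rewrite -gi; have -> : (j - i = 0)%N by lia.
  by congr g; apply: val_inj; rewrite /= ij.
Qed.

Lemma dl_nth x l : dl x l = (\sum_(i < size l) (nth 0 (x :: l) i.+1 < nth 0 (x :: l) i)%R)%N.
Proof.
elim: l x => [|y l IH] x; first by rewrite big_ord0.
by rewrite big_ord_recl /= IH.
Qed.

Lemma card_set_sum k (P : pred 'I_k) : #|[set i | P i]| = (\sum_(i < k) P i)%N.
Proof.
rewrite -sum1_card big_mkcond /=; apply: eq_bigr => i _; rewrite inE; by case: (P i).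
Qed.

Definition LB k (s : 'S_k) (e : {ffun 'I_k -> bool}) : seq int :=
  [seq sperm_val s e j | j <- enum 'I_k].

Arguments LB {k}.
Lemma size_LB k s e : size (@LB k s e) = k.
Proof. by rewrite size_map size_enum_ord. Qed.

Lemma sperm_at_nth k s e j : @sperm_at k s e j = nth 0 (0 :: LB s e) j.
Proof.
case: j => [|j] //=; case: insubP => [jo hj vj|hj].
  by rewrite /LB (nth_map jo) ?size_enum_ord // -vj nth_ord_enum.
by rewrite nth_default // size_LB leqNgt.
Qed.

Lemma desB_dl k s e : @desB k s e = dl 0 (LB s e).
Proof.
rewrite /desB card_set_sum dl_nth size_LB.
by apply: eq_bigr => i _; rewrite !sperm_at_nth.
Qed.

Definition LA n (s : 'S_n) : seq int := [seq ((s j).+1)%:Z | j <- enum 'I_n].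
Arguments LA {n}.

Lemma size_LA n s : size (@LA n s) = n.
Proof. by rewrite size_map size_enum_ord. Qed.

Lemma nth_LA n (s : 'S_n) (j : 'I_n) : nth 0 (LA s) j = ((s j).+1)%:Z.
Proof. by rewrite /LA (nth_map j) ?size_enum_ord // nth_ord_enum. Qed.

Lemma des_dl n s : @des n s = dl 0 (LA s).
Proof.
rewrite /des card_set_sum dl_nth size_LA.
case: n s => [|m] s; first by rewrite !big_ord0.
rewrite big_ord_recr big_ord_recl /= ltnn /= addn0.
have h0 : (nth 0 (LA s) 0 < 0)%R = false by rewrite (nth_LA _ s ord0).
rewrite h0 !add0n.
apply: eq_bigr => i _.
have h1 : nth 0 (LA s) i = ((s (widen_ord (leqnSn m) i)).+1)%:Z.
  by rewrite -(nth_LA _ s (widen_ord (leqnSn m) i)).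
have h2 : nth 0 (LA s) (bump 0 i) = ((s (lift ord0 i)).+1)%:Z.
  by rewrite -(nth_LA _ s (lift ord0 i)).
rewrite /= h1 h2 ltz_nat ltnS ltn_ord /=.
rewrite ltnS.
congr (nat_of_bool _).
apply/idP/idP => [/existsP [j /andP[/eqP hj lt]]|lt].
  have -> : lift ord0 i = j by apply: val_inj; rewrite /= hj /bump.
  exact: lt.
by apply/existsP; exists (lift ord0 i); rewrite /= lt andbT /bump.
Qed.

Lemma LA_lift n (i : 'I_n.+1) (s : 'S_n) :
  LA (lift_perm i ord_max s) = ins i (LA s) (n.+1)%:Z.
Proof.
rewrite /LA /ins; apply: map_lift; first by rewrite lift_perm_id.
by move=> k; rewrite lift_perm_lift /= /bump leqNgt ltn_ord.
Qed.

Lemma LB_lift n (i : 'I_n.+1) (s : 'S_n) b e :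
  LB (lift_perm i ord_max s) (extf i b e) = ins i (LB s e) ((-1) ^+ b * (n.+1)%:Z).
Proof.
rewrite /LB /ins; apply: map_lift.
  by rewrite /sperm_val lift_perm_id /extf ffunE unlift_none.
move=> k; rewrite /sperm_val lift_perm_lift /extf ffunE liftK /=.
by rewrite /bump leqNgt ltn_ord.
Qed.

Lemma derivXS (d : nat) : ('X^(d.+1) : {poly int})^`() = (d.+1)%:R * 'X^d.
Proof. by rewrite derivXn mulr_natl. Qed.

Lemma recA n : eulerA n.+1 = (n.+1)%:R * 'X * eulerA n + 'X * (1 - 'X) * (eulerA n)^`().
Proof.
rewrite /eulerA sum_perm_lift exchange_big /=.
rewrite raddf_sum !mulr_sumr -big_split /=.
apply: eq_bigr => s _.
under eq_bigr => i _ do rewrite des_dl LA_lift exprS.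
rewrite -mulr_sumr.
have IP := @insP (n.+1)%:Z (LA s) 0.
rewrite size_LA in IP; rewrite IP; last first.
  rewrite /=; apply/allP => y /mapP [j _ ->].
  by rewrite ltz_nat ltnS ltn_ord.
rewrite des_dl derivXS !exprS -natr1.
ring.
Qed.

Lemma recB k : eulerB k.+1 =
  (1 + (2 * k + 1)%N%:R * 'X) * eulerB k + 2%:R * 'X * (1 - 'X) * (eulerB k)^`().
Proof.
rewrite /eulerB sum_perm_lift.
rewrite (eq_bigr (fun i : 'I_k.+1 => \sum_(s : 'S_k) \sum_(b : bool) \sum_(e : {ffun 'I_k -> bool})
    'X^(desB (lift_perm i ord_max s) (extf i b e)))); last first.
  by move=> i _; apply: eq_bigr => s _; exact: sum_ffun_lift.
rewrite exchange_big /= raddf_sum !mulr_sumr -big_split /=.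
apply: eq_bigr => s _.
rewrite exchange_big /=.
under eq_bigr => b _ do rewrite exchange_big /=.
rewrite exchange_big /= raddf_sum !mulr_sumr -big_split /=.
apply: eq_bigr => e _.
rewrite big_bool /=.
under eq_bigr => i _ do rewrite desB_dl LB_lift expr1 mulN1r.
under [X in _ + X = _]eq_bigr => i _ do rewrite desB_dl LB_lift expr0 mul1r.
have IP := @insP (k.+1)%:Z (LB s e) 0.
have IN := @insN (- (k.+1)%:Z) (LB s e) 0.
rewrite size_LB in IP IN; rewrite IP ?IN; first last.
- rewrite /=; apply/allP => y /mapP [j _ ->].
  rewrite /sperm_val; move: (ltn_ord (s j)); case: (e j);
    rewrite ?expr0 ?expr1 ?mul1r ?mulN1r => h; lia.
- rewrite /=; apply/allP => y /mapP [j _ ->].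
  rewrite /sperm_val; move: (ltn_ord (s j)); case: (e j);
    rewrite ?expr0 ?expr1 ?mul1r ?mulN1r => h; lia.
rewrite desB_dl.
case: (dl 0 (LB s e)) => [|d].
  have d1 : (1 : {poly int})^`() = 0 by rewrite -polyC1 derivC.
  rewrite !expr0 expr1 d1 -!natr1 !natrD; ring.
rewrite derivXS !exprS -!natr1 !natrD.
ring.
Qed.


Lemma eulerA0 : eulerA 0 = 'X.
Proof.
rewrite /eulerA (eq_bigr (fun _ => 'X)); last first.
  move=> s _; rewrite des_dl.
  have -> : LA s = [::] by apply: size0nil; rewrite size_LA.
  by rewrite expr1.
by rewrite sumr_const card_Sn.
Qed.

Lemma eulerB0 : eulerB 0 = 1.
Proof.
rewrite /eulerB (eq_bigr (fun _ => 1)); last first.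
  move=> s _; rewrite (eq_bigr (fun _ => 1)) ?sumr_const ?card_ffun ?card_ord ?card_bool //.
  move=> e _; rewrite desB_dl.
  have -> : LB s e = [::] by apply: size0nil; rewrite size_LB.
  by rewrite expr0.
by rewrite sumr_const card_Sn.
Qed.

Theorem mainTheorem17 (n : nat) (hn : (1 <= n)%N) :
  2 ^+ n * eulerA n.+1 =
  'X * \sum_(0 <= k < n.+1) ('C(n, k))%:R * (eulerB k * eulerB (n - k)).
Proof.
rewrite big_mkord.
apply: (@alg_main (fun n => eulerA n.+1)) => //.
- by rewrite recA eulerA0 derivX; ring.
- exact: eulerB0.
- by move=> m; rewrite recA.
- exact: recB.
Qed.
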